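(* Let $A$ be a finite alphabet, let $f$ be a bLSP morphism on $A$ and let $\mathbf{w}$ be an infinite word over $A$. If $f(\mathbf{w})$ is LSP, then $\mathbf{w}$ is LSP.
   Context: A finite word $u$ is a left special factor of a word $w$ if there are distinct letters $x\neq y$ with $xu$ and $yu$ factors of $w$. A word is LSP if every left special factor of it is a prefix of it. A bLSP morphism on $A$ is an endomorphism $f$ of $A^*$ such that there is a letter $\alpha$ with $f(\alpha)=\alpha$ and, for every letter $\beta\neq\alpha$, there is a letter $\gamma$ with $f(\beta)=f(\gamma)\beta$. *)

(* Defs.v *)
From mathcomp Require Import all_boot.
Set Implicit Arguments. Unset Strict Implicit. Unset Printing Implicit Defensive.

Definition infword (A : Type) := nat -> A.

Definition factor (A : finType) (u : seq A) (w : infword A) : Prop :=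
  exists i, u = mkseq (fun k => w (i + k)) (size u).
Definition prefix_of (A : finType) (u : seq A) (w : infword A) : Prop :=
  u = mkseq w (size u).

Definition left_special (A : finType) (u : seq A) (w : infword A) : Prop :=
  exists x y : A, x != y /\ factor (x :: u) w /\ factor (y :: u) w.

Definition LSP (A : finType) (w : infword A) : Prop :=
  forall u, left_special u w -> prefix_of u w.

Definition morph (A : finType) (f : A -> seq A) (s : seq A) : seq A :=
  flatten (map f s).

Definition bLSP (A : finType) (f : A -> seq A) : Prop :=
  exists alpha : A, f alpha = [:: alpha] /\
    forall beta : A, beta != alpha -> exists gamma : A, f beta = rcons (f gamma) beta.

(* Image of an infinite word under a non-erasing morphism:
   the n-th letter of f(w) is the n-th letter of f(w_0 ... w_n)
   (which has length >= n+1 when f is non-erasing). *)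
Definition morph_inf (A : finType) (f : A -> seq A) (w : infword A) : infword A :=
  fun n => nth (w 0) (morph f (mkseq w n.+1)) n.

(* Main.v *)
Require Import Defs.
From mathcomp Require Import all_boot.
Set Implicit Arguments. Unset Strict Implicit.

Lemma shape (A : finType) (f : A -> seq A) alpha :
  f alpha = [:: alpha] ->
  (forall beta, beta != alpha -> exists gamma, f beta = rcons (f gamma) beta) ->
  forall b, exists t, f b = alpha :: t /\ alpha \notin t /\ last alpha t = b.
Proof.
move=> H1 H2 b; have [n] := ubnP (size (f b)); elim: n b => // n IH b Hs.
case: (eqVneq b alpha) => [->|nb]; first by exists [::]; rewrite H1.
have [g Hg] := H2 b nb.
have [|t [Ht [Hn Hl]]] := IH g; first by rewrite Hg size_rcons ltnS in Hs.
exists (rcons t b); rewrite Hg Ht rcons_cons; split => //; split.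
  by rewrite mem_rcons in_cons negb_or eq_sym nb Hn.
by rewrite last_rcons.
Qed.

Lemma morph_cat (A : finType) (f : A -> seq A) s1 s2 :
  morph f (s1 ++ s2) = morph f s1 ++ morph f s2.
Proof. by rewrite /morph map_cat flatten_cat. Qed.

Lemma morph_cons (A : finType) (f : A -> seq A) a s :
  morph f (a :: s) = f a ++ morph f s.
Proof. by []. Qed.

Lemma size_morph (A : finType) (f : A -> seq A) s :
  (forall b, 0 < size (f b)) -> size s <= size (morph f s).
Proof.
move=> H; elim: s => //= a s IH; rewrite morph_cons size_cat.
by rewrite -add1n leq_add // H.
Qed.

Lemma head_morph (A : finType) (f : A -> seq A) alpha s Z :
  (forall b, head alpha (f b) = alpha) -> head alpha Z = alpha ->
  head alpha (morph f s ++ Z) = alpha.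
Proof.
move=> H HZ; elim: s => [|a s IH]; first by [].
rewrite morph_cons -catA; have := H a.
by case: (f a).
Qed.

Lemma decomp (A : eqType) (alpha : A) (ta tb X Y : seq A) :
  alpha \notin ta -> alpha \notin tb -> head alpha X = alpha ->
  head alpha Y = alpha -> ta ++ X = tb ++ Y -> ta = tb.
Proof.
elim: ta tb => [|c ta IH] [|d tb] //=.
- move=> _ Hd HX _ E; move: HX; rewrite E /= => E'.
  by move: Hd; rewrite E' in_cons eqxx.
- move=> Hc _ _ HY E; move: HY; rewrite -E /= => E'.
  by move: Hc; rewrite E' in_cons eqxx.
- rewrite !in_cons !negb_or => /andP[Hc Ha] /andP[Hd Hb] HX HY [-> E].
  by rewrite (IH tb Ha Hb HX HY E).
Qed.

Lemma parse (A : finType) (f : A -> seq A) alpha :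
  (forall b, exists t, f b = alpha :: t /\ alpha \notin t /\ last alpha t = b) ->
  forall s t r, morph f t = morph f s ++ alpha :: r -> s = take (size s) t.
Proof.
move=> sh; have hd : forall b, head alpha (f b) = alpha.
  by move=> b; have [t [-> _]] := sh b.
elim=> [|a s IH] [|b t] r //=.
- by rewrite morph_cons; have [t [-> _]] := sh a.
- rewrite !morph_cons -catA => E.
  have [ta [Ea [Na La]]] := sh a; have [tb [Eb [Nb Lb]]] := sh b.
  move: E; rewrite Ea Eb /= => -[E].
  have Etab : tb = ta.
    apply: (decomp Nb Na _ _ E); first by case: t {E} => // c t; rewrite morph_cons; have [tc [-> _]] := sh c.
    by apply: head_morph.
  have {}E : morph f t = morph f s ++ alpha :: r.
    by move: E; rewrite Etab; elim: (ta) => //= c l IHl [].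
  have Eab : b = a by rewrite -Lb -La Etab.
  by rewrite Eab -(IH t r E).
Qed.

Lemma mkseq_add (A : Type) (w : nat -> A) i m :
  mkseq w (i + m) = mkseq w i ++ mkseq (fun k => w (i + k)) m.
Proof.
rewrite /mkseq iotaD map_cat; congr (_ ++ _).
by rewrite add0n -{1}(addn0 i) iotaDl -map_comp.
Qed.

Lemma Fnth (A : finType) (f : A -> seq A) (w : nat -> A) N n :
  (forall b, 0 < size (f b)) ->
  n < size (morph f (mkseq w N)) ->
  morph_inf f w n = nth (w 0) (morph f (mkseq w N)) n.
Proof.
move=> Hp Hn; rewrite /morph_inf.
case: (leqP n.+1 N) => H.
  rewrite -(subnKC H) mkseq_add morph_cat nth_cat.
  have := size_morph (mkseq w n.+1) Hp; rewrite size_mkseq => ->.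
  by [].
rewrite -(subnKC (ltnW H)) mkseq_add morph_cat nth_cat Hn.
by [].
Qed.

Lemma factor_of (A : finType) (f : A -> seq A) (w : nat -> A) N P S T :
  (forall b, 0 < size (f b)) ->
  morph f (mkseq w N) = P ++ S ++ T -> factor S (morph_inf f w).
Proof.
move=> Hp E; exists (size P).
apply: (@eq_from_nth _ (w 0)); first by rewrite size_mkseq.
move=> k Hk; rewrite nth_mkseq // (Fnth (N := N) Hp); last first.
  by rewrite E !size_cat ltn_add2l (leq_trans Hk) // leq_addr.
by rewrite E nth_cat ltnNge leq_addr /= addKn nth_cat Hk.
Qed.

Lemma prefix_takeF (A : finType) (f : A -> seq A) (w : nat -> A) v :
  (forall b, 0 < size (f b)) -> prefix_of v (morph_inf f w) ->
  v = take (size v) (morph f (mkseq w (size v))).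
Proof.
move=> Hp E.
have Hs : size v <= size (morph f (mkseq w (size v))).
  by have := size_morph (mkseq w (size v)) Hp; rewrite size_mkseq.
apply: (@eq_from_nth _ (w 0)); first by rewrite size_take_min (minn_idPl Hs).
move=> k Hk; rewrite nth_take //.
transitivity (nth (w 0) (mkseq (morph_inf f w) (size v)) k); first by rewrite -E.
rewrite nth_mkseq // (Fnth (N := size v) Hp) //.
exact: leq_trans Hk Hs.
Qed.

Unset Implicit Arguments. Set Strict Implicit.

Theorem lemma2 (A : finType) (f : A -> seq A) (w : nat -> A) :
  bLSP f -> LSP (morph_inf f w) -> LSP w.
Proof.
move=> [alpha [H1 H2]] HF u [x [y [nxy [[i Hx] [j Hy]]]]].
have sh := shape H1 H2.
have Hp : forall b, 0 < size (f b) by move=> b; have [t [-> _]] := sh b.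
have fac : forall z i, z :: u = mkseq (fun k => w (i + k)) (size (z :: u)) ->
    factor (z :: rcons (morph f u) alpha) (morph_inf f w).
  move=> z i0 Hz.
  have E : mkseq w (i0 + (size u).+2) = mkseq w i0 ++ rcons (z :: u) (w (i0 + (size u).+1)).
    by rewrite mkseq_add mkseqS Hz.
  have [tz [Ez [_ Lz]]] := sh z.
  have [ta [Ea _]] := sh (w (i0 + (size u).+1)).
  apply: (factor_of (N := i0 + (size u).+2)
     (P := morph f (mkseq w i0) ++ belast alpha tz) (T := ta) Hp).
  rewrite E morph_cat -cats1 morph_cat morph_cons.
  have -> : morph f [:: w (i0 + (size u).+1)] = f (w (i0 + (size u).+1)) by rewrite /morph /= cats0.
  rewrite Ea Ez lastI Lz.
  by rewrite -!catA cat_rcons /= cat_rcons.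
have LS : left_special (rcons (morph f u) alpha) (morph_inf f w).
  by exists x, y; split => //; split; [exact: fac Hx | exact: fac Hy].
have Pr := prefix_takeF Hp (HF _ LS).
set L := size (rcons (morph f u) alpha) in Pr.
set M := morph f (mkseq w L) in Pr.
have EM : M = morph f u ++ alpha :: drop L M.
  by rewrite -{1}(cat_take_drop L M) -Pr cat_rcons.
have Hu := parse sh EM.
have HuL : size u <= L.
  by rewrite /L size_rcons ltnW // ltnS size_morph.
rewrite /prefix_of Hu -(subnKC HuL) mkseq_add take_size_cat ?size_mkseq //.
Qed.
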